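(* Let $\mathbb{F}$ be a finite field of odd characteristic, $V=\mathbb{F}^d$ with $d>2$, $U$ an $r$-dimensional subspace with $0<r<d$, and $H=\mathrm{GL}(V)_U$. Then $A^2V$ is a uniserial $H$-module whose only $H$-submodules are $\{0\}, A^2U, U\wedge V, A^2V$, where $U\wedge V=\langle u\wedge v\mid u\in U, v\in V\rangle$; the successive factors satisfy $A^2V/(U\wedge V)\cong A^2(V/U)$, $(U\wedge V)/A^2U\cong U\otimes (V/U)$, and they have dimensions $\binom{d-r}2$, $r(d-r)$, $\binom r2$ respectively.
   Context: $A^2V$ is the exterior square of $V$, with $H$ acting diagonally, and $A^2U$ is identified with its image in $A^2V$. *)

(* Defs.v *)
From HB Require Import structures.
From mathcomp Require Import all_boot all_order all_algebra all_fingroup all_field.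
Set Implicit Arguments. Unset Strict Implicit. Unset Printing Implicit Defensive.
Import GRing.Theory.
Local Open Scope ring_scope.

(* V = F^d as row vectors 'rV[F]_d; GL(V) acts on the right: v |-> v *m g.
   Exterior square A^2 V is modelled as the space of d x d matrices, with
   u /\ v := u^T v - v^T u  (the standard embedding of A^2 V as alternating
   matrices); the diagonal action (u g) /\ (v g) is then M |-> g^T M g. *)
Definition wedge (F : fieldType) (d : nat) (u v : 'rV[F]_d) : 'M[F]_d :=
  u^T *m v - v^T *m u.

(* S /\ T := < u /\ v | u in S, v in T >  (so A^2 U = wedge2 U U,
   U /\ V = wedge2 U fullv, A^2 V = wedge2 fullv fullv). *)
Definition wedge2 (F : finFieldType) (d : nat) (S T : {vspace 'rV[F]_d})
  : {vspace 'M[F]_d} :=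
  <<[seq wedge x.1 x.2 |
     x <- enum [pred x : 'rV[F]_d * 'rV[F]_d | (x.1 \in S) && (x.2 \in T)]]>>%VS.

(* S (x) T, modelled inside F^d (x) F^e = 'M_(d,e) via u (x) w := u^T w. *)
Definition tensor2 (F : finFieldType) (d e : nat) (S : {vspace 'rV[F]_d})
  (T : {vspace 'rV[F]_e}) : {vspace 'M[F]_(d, e)} :=
  <<[seq x.1^T *m x.2 |
     x <- enum [pred x : 'rV[F]_d * 'rV[F]_e | (x.1 \in S) && (x.2 \in T)]]>>%VS.

Definition inH (F : fieldType) (d : nat) (U : {vspace 'rV[F]_d}) (g : 'M[F]_d) : Prop :=
  g \in unitmx /\ forall u, u \in U -> u *m g \in U.

Definition Hinvariant (F : fieldType) (d : nat) (U : {vspace 'rV[F]_d})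
  (W : {vspace 'M[F]_d}) : Prop :=
  forall g, inH U g -> forall M, M \in W -> g^T *m M *m g \in W.

(* Main.v *)
Require Import Defs.
From HB Require Import structures.
From mathcomp Require Import all_boot all_order all_algebra all_fingroup all_field.
From mathcomp Require Import zify.
Set Implicit Arguments. Unset Strict Implicit. Unset Printing Implicit Defensive.
Import GRing.Theory.
Local Open Scope ring_scope.

Section General.
Variable F : finFieldType.

Lemma wedgeN n (x y : 'rV[F]_n) : wedge y x = - wedge x y.
Proof. by rewrite /wedge opprB. Qed.

Lemma wedge_tr n (x y : 'rV[F]_n) : (wedge x y)^T = - wedge x y.
Proof. by rewrite /wedge linearB /= !trmx_mul !trmxK opprB. Qed.

Lemma wedgeM n m (A : 'M[F]_(n, m)) (x y : 'rV[F]_n) :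
  wedge (x *m A) (y *m A) = A^T *m wedge x y *m A.
Proof.
by rewrite /wedge mulmxBr mulmxBl !trmx_mul !mulmxA.
Qed.

Lemma span_ind (vT : vectType F) (Q : vT -> Prop) (X : seq vT) :
  Q 0 -> (forall a x y, Q x -> Q y -> Q (a *: x + y)) ->
  (forall x, x \in X -> Q x) -> forall v, v \in <<X>>%VS -> Q v.
Proof.
move=> Q0 QC QX v /(@coord_span _ _ _ (in_tuple X)) ->.
elim/big_rec: _ => // i y _ Qy.
have -> : coord (in_tuple X) i v *: (in_tuple X)`_i + y = 
   coord (in_tuple X) i v *: (in_tuple X)`_i + y by [].
apply: QC => //; apply: QX; exact: mem_nth.
Qed.

Lemma wedge2_gen n (S T : {vspace 'rV[F]_n}) x y :
  x \in S -> y \in T -> wedge x y \in wedge2 S T.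
Proof.
move=> xS yT; apply: memv_span.
by apply/mapP; exists (x, y) => //; rewrite mem_enum; apply/andP.
Qed.

Lemma wedge2_ind n (S T : {vspace 'rV[F]_n}) (Q : 'M[F]_n -> Prop) :
  Q 0 -> (forall a x y, Q x -> Q y -> Q (a *: x + y)) ->
  (forall x y, x \in S -> y \in T -> Q (wedge x y)) ->
  forall M, M \in wedge2 S T -> Q M.
Proof.
move=> Q0 QC QG; apply: span_ind => // M /mapP [[x y]].
by rewrite mem_enum => /andP [xS yT] ->; apply: QG.
Qed.

Lemma tensor2_gen n m (S : {vspace 'rV[F]_n}) (T : {vspace 'rV[F]_m}) x y :
  x \in S -> y \in T -> x^T *m y \in tensor2 S T.
Proof.
move=> xS yT; apply: memv_span.
by apply/mapP; exists (x, y) => //; rewrite mem_enum; apply/andP.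
Qed.

Lemma tensor2_ind n m (S : {vspace 'rV[F]_n}) (T : {vspace 'rV[F]_m})
   (Q : 'M[F]_(n, m) -> Prop) :
  Q 0 -> (forall a x y, Q x -> Q y -> Q (a *: x + y)) ->
  (forall x y, x \in S -> y \in T -> Q (x^T *m y)) ->
  forall M, M \in tensor2 S T -> Q M.
Proof.
move=> Q0 QC QG; apply: span_ind => // M /mapP [[x y]].
by rewrite mem_enum => /andP [xS yT] ->; apply: QG.
Qed.


Lemma wedge_delta n (i j : 'I_n) :
  wedge (delta_mx 0 i) (delta_mx 0 j) = delta_mx i j - delta_mx j i :> 'M[F]_n.
Proof. by rewrite /wedge !trmx_delta !mul_delta_mx. Qed.

Lemma sum_delta_tr n (N : 'M[F]_n) :
  \sum_i \sum_j N i j *: delta_mx j i = N^T.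
Proof.
rewrite [RHS]matrix_sum_delta exchange_big /=.
by apply: eq_bigr => i _; apply: eq_bigr => j _; rewrite mxE.
Qed.

Lemma skew_decomp n (h2 : (2%:R : F) != 0) (B : 'M[F]_n) (N : 'M[F]_n) :
  N^T = - N ->
  B^T *m N *m B = 2%:R^-1 *: \sum_i \sum_j N i j *: wedge (row i B) (row j B).
Proof.
move=> skN.
have -> : \sum_i \sum_j N i j *: wedge (row i B) (row j B) =
   B^T *m (\sum_i \sum_j N i j *: (delta_mx i j - delta_mx j i)) *m B.
  rewrite mulmx_sumr mulmx_suml; apply: eq_bigr => i _.
  rewrite mulmx_sumr mulmx_suml; apply: eq_bigr => j _.
  by rewrite !rowE wedgeM wedge_delta -scalemxAr -scalemxAl.
have -> : \sum_i \sum_j N i j *: (delta_mx i j - delta_mx j i) = 2%:R *: N.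
  under eq_bigr do under eq_bigr do rewrite scalerBr.
  under eq_bigr do rewrite sumrB.
  rewrite sumrB -matrix_sum_delta sum_delta_tr skN opprK.
  by rewrite scaler_nat mulr2n.
by rewrite -scalemxAr -scalemxAl scalerA mulVf // scale1r.
Qed.

Lemma mem_wedge2_coords n (h2 : (2%:R : F) != 0) (B : 'M[F]_n)
   (S T : {vspace 'rV[F]_n}) (N : 'M[F]_n) :
  N^T = - N ->
  (forall i j, N i j != 0 ->
     (row i B \in S /\ row j B \in T) \/ (row j B \in S /\ row i B \in T)) ->
  B^T *m N *m B \in wedge2 S T.
Proof.
move=> skN hN; rewrite skew_decomp //; apply: memvZ.
apply: memv_suml => i _; apply: memv_suml => j _.
have [->|/hN [[iS jT]|[jS iT]]] := eqVneq (N i j) 0.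
- by rewrite scale0r mem0v.
- by apply: memvZ; apply: wedge2_gen.
- by apply: memvZ; rewrite wedgeN memvN; apply: wedge2_gen.
Qed.

Lemma wedge2_skew n (S T : {vspace 'rV[F]_n}) M :
  M \in wedge2 S T -> M^T = - M.
Proof.
move=> HM; apply: (@wedge2_ind n S T (fun M => M^T = - M)) HM => [|a x y hx hy|x y _ _]; first by rewrite trmx0 oppr0.
  by rewrite linearD linearZ /= hx hy opprD scalerN.
exact: wedge_tr.
Qed.

Lemma A2full n (h2 : (2%:R : F) != 0) (M : 'M[F]_n) :
  M \in wedge2 fullv fullv <-> M^T = - M.
Proof.
split; first exact: wedge2_skew.
move=> skM; have := @mem_wedge2_coords n h2 1%:M fullv fullv M skM.
rewrite trmx1 mul1mx mulmx1; apply => i j _; left; split; exact: memvf.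
Qed.

Lemma wedge2_mono n (S T S' T' : {vspace 'rV[F]_n}) :
  (S <= S')%VS -> (T <= T')%VS -> (wedge2 S T <= wedge2 S' T')%VS.
Proof.
move=> hS hT; apply/span_subvP => M /mapP [[x y]].
rewrite mem_enum => /andP [xS yT] ->.
by apply: wedge2_gen; [apply: (subvP hS) | apply: (subvP hT)].
Qed.

End General.
Section Coords.
Variable F : finFieldType.
Variables (d : nat) (U : {vspace 'rV[F]_d}).
Local Notation r := (\dim U).
Lemma hU : \dim U = r. Proof. by []. Qed.
Lemma hrd : (r <= d)%N.
Proof.
have := dimvS (subvf U); rewrite dimvf dim_matrix.
by rewrite mul1r.
Qed.

Lemma span_coords (Y Z : seq 'rV[F]_d) v (hY : (size Y <= d)%N) :
  v \in <<Y>>%VS -> exists c : 'rV[F]_d,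
    (forall j : 'I_d, (size Y <= j)%N -> c 0 j = 0) /\
    v = c *m (\matrix_(i < d) (Y ++ Z)`_i).
Proof.
move=> /(@coord_span _ _ _ (in_tuple Y)) ->.
set a := coord _.
exists (\sum_(i < size Y) a i v *: delta_mx 0 (widen_ord hY i)); split.
  move=> j hj; rewrite summxE big1 // => i _; rewrite !mxE.
  rewrite eqxx /=; case: eqP => [hij|]; last by rewrite mulr0.
  by move: hj; rewrite hij /= => hj; have := leq_ltn_trans hj (ltn_ord i); rewrite ltnn.
rewrite mulmx_suml; apply: eq_bigr => i _.
by rewrite -scalemxAl -rowE rowK nth_cat /= (ltn_ord i).
Qed.

Definition Xb := (vbasis U : seq _) ++ (vbasis U^C : seq _).
Definition Bm : 'M[F]_d := \matrix_(i < d) Xb`_i.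

Lemma size_Xb : size Xb = d.
Proof.
rewrite /Xb size_cat !size_tuple dimv_compl dimvf dim_matrix.
by rewrite mul1r subnKC // hrd.
Qed.

Lemma span_Xb : <<Xb>>%VS = fullv.
Proof.
by rewrite span_cat (span_basis (vbasisP U)) (span_basis (vbasisP U^C)) addv_complf.
Qed.

Lemma Bm_unit : Bm \in unitmx.
Proof.
have hX : (size Xb <= d)%N by rewrite size_Xb.
have hc (i : 'I_d) : exists c : 'rV[F]_d, delta_mx 0 i == c *m Bm.
  have := @span_coords Xb [::] (delta_mx 0 i) hX.
  rewrite span_Xb memvf cats0 => /(_ isT) [c [_ ->]]; by exists c.
pose C := \matrix_(i < d) xchoose (hc i).
suff /mulmx1_unit [] : C *m Bm = 1%:M by [].
apply/row_matrixP => i; rewrite row_mul rowK row1.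
exact/esym/eqP/(xchooseP (hc i)).
Qed.

Lemma row_Bm_U (i : 'I_d) : (i < r)%N -> row i Bm \in U.
Proof.
move=> ir; have ir' : (i < \dim U)%N by [].
rewrite rowK /Xb nth_cat size_tuple ir'.
by apply: vbasis_mem; apply: mem_nth; rewrite size_tuple.
Qed.

Lemma coordU v : v \in U <-> forall j : 'I_d, (r <= j)%N -> (v *m invmx Bm) 0 j = 0.
Proof.
split.
  move=> vU.
  have hY : (size (vbasis U : seq _) <= d)%N by rewrite size_tuple ?hrd.
  have := @span_coords (vbasis U) (vbasis U^C) v hY.
  rewrite (span_basis (vbasisP U)) vU => /(_ isT) [c [hc ->]].
  rewrite mulmxK ?Bm_unit // => j hj; apply: hc; by rewrite size_tuple ?hrd.
move=> hv; rewrite -(mulmxKV Bm_unit v) mulmx_sum_row.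
apply: memv_suml => j _; case: (ltnP j r) => hj.
  by apply: memvZ; apply: row_Bm_U.
by rewrite hv // scale0r mem0v.
Qed.


Hypothesis h2 : (2%:R : F) != 0.

Local Notation Bi := (invmx Bm).
Local Notation A2U := (wedge2 U U).
Local Notation UV := (wedge2 U fullv).
Local Notation A2V := (wedge2 (fullv : {vspace 'rV[F]_d}) fullv).

Lemma BiBm : Bi *m Bm = 1%:M. Proof. exact: mulVmx Bm_unit. Qed.
Lemma BmBi : Bm *m Bi = 1%:M. Proof. exact: mulmxV Bm_unit. Qed.

Lemma coordM (M : 'M[F]_d) : M = Bm^T *m (Bi^T *m M *m Bi) *m Bm.
Proof.
by rewrite !mulmxA -trmx_mul BiBm trmx1 mul1mx -mulmxA BiBm mulmx1.
Qed.

Lemma coord_skew (M : 'M[F]_d) : M^T = - M -> (Bi^T *m M *m Bi)^T = - (Bi^T *m M *m Bi).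
Proof. by move=> sk; rewrite !trmx_mul trmxK sk mulNmx mulmxN mulmxA. Qed.

Lemma wedge_entry n (a b : 'rV[F]_n) i j : wedge a b i j = a 0 i * b 0 j - b 0 i * a 0 j.
Proof. by rewrite /wedge !mxE !big_ord1 !mxE. Qed.

Lemma coord_wedge x y : Bi^T *m wedge x y *m Bi = wedge (x *m Bi) (y *m Bi).
Proof. by rewrite wedgeM. Qed.

Lemma coord_lin (a : F) (M M' : 'M[F]_d) i j :
  (Bi^T *m (a *: M + M') *m Bi) i j =
  a * (Bi^T *m M *m Bi) i j + (Bi^T *m M' *m Bi) i j.
Proof. by rewrite mulmxDr mulmxDl -scalemxAr -scalemxAl !mxE. Qed.

Lemma memA2V (M : 'M[F]_d) : M \in A2V <-> M^T = - M.
Proof. exact: A2full. Qed.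

Lemma memUV (M : 'M[F]_d) : M \in UV <->
  M^T = - M /\ (forall i j : 'I_d, (r <= i)%N -> (r <= j)%N -> (Bi^T *m M *m Bi) i j = 0).
Proof.
split.
  move=> HM; split; first exact: wedge2_skew HM.
  move: M HM; apply: wedge2_ind => [|a x y hx hy|x y xU _] i j hi hj.
  - by rewrite mulmx0 mul0mx mxE.
  - by rewrite coord_lin hx // hy // mulr0 addr0.
  - by rewrite coord_wedge wedge_entry !(proj1 (coordU x) xU) // mulr0 mul0r subr0.
move=> [sk hc]; rewrite [M]coordM; apply: mem_wedge2_coords => //.
  exact: coord_skew.
move=> i j hij; case: (ltnP i r) => hi.
  by left; split; [apply: row_Bm_U|apply: memvf].
case: (ltnP j r) => hj; first by right; split; [apply: row_Bm_U|apply: memvf].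
by rewrite hc ?eqxx in hij.
Qed.

Lemma memA2U (M : 'M[F]_d) : M \in A2U <->
  M^T = - M /\ (forall i j : 'I_d, (r <= j)%N -> (Bi^T *m M *m Bi) i j = 0).
Proof.
split.
  move=> HM; split; first exact: wedge2_skew HM.
  move: M HM; apply: wedge2_ind => [|a x y hx hy|x y xU yU] i j hj.
  - by rewrite mulmx0 mul0mx mxE.
  - by rewrite coord_lin hx // hy // mulr0 addr0.
  - by rewrite coord_wedge wedge_entry (proj1 (coordU _) xU j hj) (proj1 (coordU _) yU j hj) !mulr0 subr0.
move=> [sk hc]; rewrite [M]coordM; apply: mem_wedge2_coords => //.
  exact: coord_skew.
move=> i j hij; case: (ltnP j r) => hj; last by rewrite hc ?eqxx in hij.
case: (ltnP i r) => hi; first by left; split; apply: row_Bm_U.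
move: hij; have /matrixP /(_ i j) := coord_skew sk.
set N := Bi^T *m M *m Bi in hc *; rewrite [LHS]mxE [RHS]mxE (hc _ _ hi) => /eqP; rewrite eq_sym oppr_eq0 => /eqP ->.
by rewrite eqxx.
Qed.


Definition ew (i j : 'I_d) : 'M[F]_d := delta_mx i j - delta_mx j i.

Lemma ewN i j : ew j i = - ew i j.
Proof. by rewrite /ew opprB. Qed.

Lemma ew_ii i : ew i i = 0.
Proof. by rewrite /ew subrr. Qed.

Lemma skew_sum (N : 'M[F]_d) : N^T = - N ->
  N = 2%:R^-1 *: \sum_i \sum_j N i j *: ew i j.
Proof.
move=> skN.
have -> : \sum_i \sum_j N i j *: ew i j = 2%:R *: N.
  rewrite /ew; under eq_bigr do under eq_bigr do rewrite scalerBr.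
  under eq_bigr do rewrite sumrB.
  rewrite sumrB -matrix_sum_delta sum_delta_tr skN opprK.
  by rewrite scaler_nat mulr2n.
by rewrite scalerA mulVf // scale1r.
Qed.

Lemma skew_diag (N : 'M[F]_d) i : N^T = - N -> N i i = 0.
Proof.
move=> /matrixP /(_ i i); rewrite !mxE => /eqP; rewrite -addr_eq0 -mulr2n.
by rewrite -mulr_natr mulf_eq0 (negPf h2) orbF => /eqP.
Qed.

Lemma inH_coord (G : 'M[F]_d) : G \in unitmx ->
  (forall i j : 'I_d, (i < r)%N -> (r <= j)%N -> G i j = 0) ->
  inH U (Bi *m G *m Bm).
Proof.
move=> Gu hG; split.
  by rewrite !unitmx_mul unitmx_inv Bm_unit Gu.
move=> u /coordU uU; apply/coordU => j hj.
rewrite -!mulmxA BmBi mulmx1 mulmxA mxE big1 // => k _.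
by case: (ltnP k r) => hk; [rewrite hG // mulr0 | rewrite uU // mul0r].
Qed.

Section Classif.
Variable W : {vspace 'M[F]_d}.
Hypothesis hWA : (W <= A2V)%VS.
Hypothesis hWH : Hinvariant U W.

Definition inW (N : 'M[F]_d) := Bm^T *m N *m Bm \in W.

Lemma inW_lin a N N' : inW N -> inW N' -> inW (a *: N + N').
Proof.
by rewrite /inW mulmxDr mulmxDl -scalemxAr -scalemxAl => h h'; apply: memvD => //; apply: memvZ.
Qed.

Lemma inW0 : inW 0.
Proof. by rewrite /inW mulmx0 mul0mx mem0v. Qed.

Lemma inWZ a N : inW N -> inW (a *: N).
Proof. by move=> h; rewrite -[_ *: _]addr0; apply: inW_lin => //; apply: inW0. Qed.

Lemma inWD N N' : inW N -> inW N' -> inW (N + N').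
Proof. by move=> h h'; rewrite -[N]scale1r; apply: inW_lin. Qed.

Lemma inWN N : inW N -> inW (- N).
Proof. by move=> h; rewrite -scaleN1r; apply: inWZ. Qed.

Lemma inWB N N' : inW N -> inW N' -> inW (N - N').
Proof. by move=> h h'; apply: inWD => //; apply: inWN. Qed.

Lemma inW_coord M : M \in W -> inW (Bi^T *m M *m Bi).
Proof. by rewrite /inW -coordM. Qed.

Lemma inW_skew N : inW N -> N^T = - N.
Proof.
move=> /(subvP hWA) /memA2V sk.
have := coord_skew sk.
by rewrite -!mulmxA BmBi mulmx1 !mulmxA -trmx_mul BmBi trmx1 mul1mx.
Qed.

Lemma inW_sum N : N^T = - N -> (forall k l, N k l != 0 -> inW (ew k l)) -> inW N.
Proof.
move=> sk h; rewrite (skew_sum sk); apply: inWZ.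
rewrite /inW mulmx_sumr mulmx_suml; apply: memv_suml => k _.
rewrite mulmx_sumr mulmx_suml; apply: memv_suml => l _.
have [->|/h hkl] := eqVneq (N k l) 0.
  by rewrite scale0r mulmx0 mul0mx mem0v.
by rewrite -scalemxAr -scalemxAl; apply: memvZ.
Qed.

Lemma inW_act (G : 'M[F]_d) N : G \in unitmx ->
  (forall i j : 'I_d, (i < r)%N -> (r <= j)%N -> G i j = 0) ->
  inW N -> inW (G^T *m N *m G).
Proof.
move=> Gu hG hN; have := hWH (inH_coord Gu hG) hN.
congr (_ \in W).
have e1 : Bi^T *m Bm^T = 1%:M by rewrite -trmx_mul BmBi trmx1.
rewrite !trmx_mul !mulmxA -(mulmxA (Bm^T *m G^T) Bi^T Bm^T) e1 mulmx1.
by rewrite -(mulmxA _ Bm Bi) BmBi mulmx1.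
Qed.


Definition sgn (k : 'I_d) : 'rV[F]_d := \row_a (if a == k then -1 else 1).

Lemma sgn_sq k a : sgn k 0 a * sgn k 0 a = 1.
Proof. by rewrite mxE; case: (a == k); rewrite ?mulrNN mulr1. Qed.

Lemma Sk_unit k : diag_mx (sgn k) \in unitmx.
Proof.
suff /mulmx1_unit [] : diag_mx (sgn k) *m diag_mx (sgn k) = 1%:M by [].
apply/matrixP => a b; rewrite mul_diag_mx !mxE.
by case: (a == b); case: (a == k); rewrite ?mulr0 ?mulNr ?mul1r ?opprK.
Qed.

Lemma Sk_block k (i j : 'I_d) : (i < r)%N -> (r <= j)%N -> diag_mx (sgn k) i j = 0.
Proof.
move=> hi hj; rewrite mxE; case: eqP => [eij|]; last by rewrite mulr0n.
by move: hi; rewrite eij ltnNge hj.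
Qed.

Definition Rk (k : 'I_d) (N : 'M[F]_d) : 'M[F]_d :=
  \matrix_(a, b) (if (a == k) (+) (b == k) then N a b else 0).

Lemma Rk_eq k N : Rk k N = 2%:R^-1 *: (N - (diag_mx (sgn k))^T *m N *m diag_mx (sgn k)).
Proof.
apply/matrixP => a b; rewrite tr_diag_mx mul_mx_diag mul_diag_mx !mxE.
have h1 : (1 - 1 : F) = 0 by rewrite subrr.
have h3 (x : F) : 2%:R^-1 * (x - x) = 0 by rewrite subrr mulr0.
have h4 (x : F) : x = 2%:R^-1 * (x + x).
  have -> : x + x = 2%:R * x by rewrite mulr_natl mulr2n.
  by rewrite mulrA mulVf // mul1r.
by case: (a == k); case: (b == k); rewrite /= ?mulN1r ?mul1r ?mulrN1 ?mulr1 ?opprK ?h3 -?h4.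
Qed.

Lemma inW_Rk k N : inW N -> inW (Rk k N).
Proof.
move=> hN; rewrite Rk_eq; apply: inWZ; apply: inWB => //.
by apply: inW_act => //; [apply: Sk_unit | apply: Sk_block].
Qed.

Lemma RR (N : 'M[F]_d) i j : N^T = - N -> i != j -> Rk j (Rk i N) = N i j *: ew i j.
Proof.
move=> sk ij; apply/matrixP => a b.
rewrite /ew; have /matrixP /(_ b a) := sk; rewrite !mxE => eNba.
have ji : j != i by rewrite eq_sym.
case: (eqVneq a i) => [ea|ai]; case: (eqVneq a j) => [ea'|aj];
  case: (eqVneq b i) => [eb|bi]; case: (eqVneq b j) => [eb'|bj];
  try subst a; try subst b; rewrite ?eqxx ?(negPf ij) ?(negPf ji) /=;
  rewrite ?andbF ?andbT ?subr0 ?sub0r ?subrr ?mulr0 ?mulr1 ?mulrN1 ?oppr0 //.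
all: try by (subst; rewrite ?eqxx in ij).
all: try by (subst; rewrite ?eqxx in ji).
Qed.



Lemma inW_ew N i j : inW N -> N i j != 0 -> inW (ew i j).
Proof.
move=> hN nz; have sk := inW_skew hN.
have ij : i != j by apply: contra nz => /eqP ->; rewrite skew_diag.
have := inW_Rk j (inW_Rk i hN); rewrite RR // => h.
by rewrite -[ew i j]scale1r -(mulVf nz) -scalerA; apply: inWZ.
Qed.

Lemma inW_ewC i j : inW (ew i j) -> inW (ew j i).
Proof. by move=> h; rewrite ewN; apply: inWN. Qed.

Lemma Gt_ew (i j l : 'I_d) : i != j -> i != l ->
  (1%:M + delta_mx i l)^T *m ew i j *m (1%:M + delta_mx i l) = ew i j + ew l j.
Proof.
move=> ij il.
have -> : (1%:M + delta_mx i l)^T = 1%:M + delta_mx l i :> 'M[F]_d.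
  by apply/matrixP => a b; rewrite !mxE andbC [b == a]eq_sym.
rewrite /ew.
rewrite !mulmxDl !mulmxDr !mul1mx !mulmx1 ?mulmxBl ?mulmxBr ?mulmxDl.
rewrite ?mulmxN ?mulNmx ?mulrnAl ?mulrnAr !mul_delta_mx_cond !eqxx (negPf ij) (eq_sym j i) (negPf ij) /=.
rewrite ?mulr0n ?mulr1n ?mul0mx ?mulmx0 ?mul0rn ?oppr0 ?addr0 ?add0r ?sub0r.
rewrite mul_delta_mx_cond (eq_sym j i) (negPf ij) mulr0n addr0.
by rewrite -addrA [- _ + _]addrC.
Qed.


Lemma inW_move (i j l : 'I_d) : inW (ew i j) -> i != j -> l != j ->
  (l < r)%N \/ (r <= i)%N -> inW (ew l j).
Proof.
move=> h ij lj hc; have [<-|il] := eqVneq i l; first by [].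
have Gu : (1%:M + delta_mx i l : 'M[F]_d) \in unitmx.
  suff /mulmx1_unit [] : (1%:M + delta_mx i l) *m (1%:M - delta_mx i l) = 1%:M :> 'M[F]_d by [].
  rewrite mulmxDl !mulmxBr !mul1mx mulmx1 mul_delta_mx_cond (eq_sym l i) (negPf il).
  by rewrite mulr0n subr0 subrK.
have hG : forall a b : 'I_d, (a < r)%N -> (r <= b)%N -> (1%:M + delta_mx i l : 'M[F]_d) a b = 0.
  move=> a b ha hb; rewrite !mxE.
  have ab : a != b by apply: contraTneq ha => ->; rewrite -leqNgt.
  rewrite (negPf ab) add0r.
  case: (eqVneq a i) => [ai|//]; case: (eqVneq b l) => [bl|//].
  by subst; case: hc => hc; [move: hb; rewrite leqNgt hc | move: ha; rewrite ltnNge hc].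
have := inW_act Gu hG h; rewrite Gt_ew // => h'.
by rewrite -(addKr (ew i j) (ew l j)); apply: inWD => //; apply: inWN.
Qed.

Lemma inW_reach (i j k l : 'I_d) : inW (ew i j) -> i != j -> k != l ->
  (k < r)%N \/ (r <= i)%N -> (l < r)%N \/ (r <= j)%N -> inW (ew k l).
Proof.
move=> h ij kl hk hl; have [kj|kj] := eqVneq k j.
  subst k; rewrite ewN; apply: inWN.
  apply: (inW_move h ij); first by rewrite eq_sym.
  case: hl => hl; [by left | right].
  by case: hk => // hk; move: hl; rewrite leqNgt hk.
have h1 : inW (ew k j) by apply: (inW_move h ij kj hk).
have h2' : inW (ew j k) by apply: inW_ewC.
have jk : j != k by rewrite eq_sym.
have lk : l != k by rewrite eq_sym.
by apply: inW_ewC; apply: (inW_move h2' jk lk hl).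
Qed.


Lemma inW_entry M a b : M \in W -> (Bi^T *m M *m Bi) a b != 0 -> inW (ew a b) /\ a != b.
Proof.
move=> /inW_coord hM nz; split; first exact: inW_ew hM nz.
by apply: contra nz => /eqP ->; rewrite (skew_diag _ (inW_skew hM)).
Qed.

Lemma classify : [\/ W = 0%VS, W = A2U, W = UV | W = A2V].
Proof.
case: (boolP [exists i : 'I_d, exists j : 'I_d,
    [&& (r <= i)%N, (r <= j)%N, i != j & inW (ew i j)]]) => [e2|ne2].
  move: e2 => /existsP [i /existsP [j /and4P [hi hj ij h]]].
  apply: Or44; apply/vspaceP => M; apply/idP/idP; first exact: (subvP hWA).
  move=> /memA2V sk; rewrite [M]coordM; apply: inW_sum; first exact: coord_skew.
  move=> k l nz; have kl : k != l.
    by apply: contra nz => /eqP ->; rewrite (skew_diag _ (coord_skew sk)).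
  by apply: (inW_reach h ij kl); right.
have not2 : forall a b : 'I_d, (r <= a)%N -> (r <= b)%N -> a != b -> ~~ inW (ew a b).
  move=> a b ha hb ab; apply/negP => h; move/negP: ne2; apply.
  by apply/existsP; exists a; apply/existsP; exists b; rewrite ha hb ab h.
case: (boolP [exists i : 'I_d, exists j : 'I_d,
    [&& (i < r)%N, (r <= j)%N & inW (ew i j)]]) => [e1|ne1].
  move: e1 => /existsP [i /existsP [j /and3P [hi hj h]]].
  have ij : i != j by apply: contraTneq hi => ->; rewrite -leqNgt.
  apply: Or43; apply/vspaceP => M; apply/idP/idP.
    move=> HM; apply/memUV; split; first exact/memA2V/(subvP hWA).
    move=> a b ha hb; apply/eqP; apply: contraT => nz.
    have [h1 h2'] := inW_entry HM nz.
    by move: (not2 a b ha hb h2'); rewrite h1.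
  move=> /memUV [sk hc]; rewrite [M]coordM; apply: inW_sum; first exact: coord_skew.
  move=> k l nz; have kl : k != l.
    by apply: contra nz => /eqP ->; rewrite (skew_diag _ (coord_skew sk)).
  case: (ltnP k r) => hk.
    by apply: (inW_reach h ij kl); [left | right].
  case: (ltnP l r) => hl; last by rewrite hc ?eqxx in nz.
  apply: inW_ewC; apply: (inW_reach h ij) => //; [by rewrite eq_sym | left | right] => //.
have not1 : forall a b : 'I_d, (a < r)%N -> (r <= b)%N -> ~~ inW (ew a b).
  move=> a b ha hb; apply/negP => h; move/negP: ne1; apply.
  by apply/existsP; exists a; apply/existsP; exists b; rewrite ha hb h.
have small : forall M a b, M \in W -> (Bi^T *m M *m Bi) a b != 0 -> (a < r)%N /\ (b < r)%N.
  move=> M a b HM nz; have [h ab] := inW_entry HM nz.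
  case: (ltnP a r) => ha; case: (ltnP b r) => hb //.
  - by move: (not1 a b ha hb); rewrite h.
  - by move: (not1 b a hb ha); rewrite (inW_ewC h).
  - by move: (not2 a b ha hb ab); rewrite h.
have [W0|Wn0] := eqVneq W 0%VS; first by apply: Or41.
apply: Or42; apply/vspaceP => M; apply/idP/idP.
  move=> HM; apply/memA2U; split; first exact/memA2V/(subvP hWA).
  move=> a b hb; apply/eqP; apply: contraT => nz.
  by have [_] := small M a b HM nz; rewrite ltnNge hb.
move=> /memA2U [sk hc].
have M0W : vpick W \in W by exact: memv_pick.
have M0n : vpick W != 0 by rewrite vpick0.
set N0 := Bi^T *m vpick W *m Bi.
case: (boolP [exists a, exists b, N0 a b != 0]) => [|/existsPn hn]; last first.
  case/negP: M0n; rewrite [vpick W]coordM -/N0.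
  have -> : N0 = 0.
    apply/matrixP => a b; have /existsPn /(_ b) := hn a; rewrite negbK => /eqP ->.
    by rewrite mxE.
  by rewrite mulmx0 mul0mx.
move=> /existsP [a0 /existsP [b0 nz0]].
have [h0 ab0] := inW_entry M0W nz0.
have [ha0 hb0] := small _ _ _ M0W nz0.
rewrite [M]coordM; apply: inW_sum; first exact: coord_skew.
move=> k l nz; have kl : k != l.
  by apply: contra nz => /eqP ->; rewrite (skew_diag _ (coord_skew sk)).
have hl : (l < r)%N by rewrite ltnNge; apply: contra nz => hl; rewrite hc.
have hk : (k < r)%N.
  rewrite ltnNge; apply: contra nz => hk.
  have /matrixP /(_ l k) := coord_skew sk.
  set N := Bi^T *m M *m Bi; rewrite [LHS]mxE [RHS]mxE (hc l k hk) oppr0 => ->.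
  by [].
by apply: (inW_reach h0 ab0 kl); left.
Qed.

End Classif.


Lemma wedge2_inv (S T : {vspace 'rV[F]_d}) (g : 'M[F]_d) :
  (forall u, u \in S -> u *m g \in S) -> (forall u, u \in T -> u *m g \in T) ->
  forall M, M \in wedge2 S T -> g^T *m M *m g \in wedge2 S T.
Proof.
move=> hS hT; apply: wedge2_ind => [|a x y hx hy|x y xS yT].
- by rewrite mulmx0 mul0mx mem0v.
- by rewrite mulmxDr mulmxDl -scalemxAr -scalemxAl; apply: memvD => //; apply: memvZ.
- by rewrite -wedgeM; apply: wedge2_gen; [apply: hS | apply: hT].
Qed.

Lemma inH_pre g v : inH U g -> v *m g \in U -> v \in U.
Proof.
move=> [gu gU] vg.
pose f := linfun (mulmxr g : 'rV[F]_d -> 'rV[F]_d).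
have fE w : f w = w *m g by rewrite lfunE.
have sub : (f @: U <= U)%VS.
  by apply/subvP => w /memv_imgP [u uU ->]; rewrite fE; apply: gU.
have ker : (U :&: lker f = 0)%VS.
  apply/eqP; rewrite -subv0; apply/subvP => w; rewrite memv_cap memv_ker fE.
  move=> /andP [_ /eqP h]; rewrite memv0; apply/eqP.
  by rewrite -(mulmxK gu w) h mul0mx.
have eqU : (f @: U)%VS = U.
  by apply/eqP; rewrite eqEdim sub (limg_dim_eq ker) leqnn.
move: vg; rewrite -{1}eqU => /memv_imgP [u uU].
rewrite fE => /(can_inj (mulmxK gu)) ->; exact: uU.
Qed.

Section PPart.
Variable P : 'M[F]_(d, d - r).
Hypothesis hP : forall v, v *m P = 0 <-> v \in U.
Hypothesis hPf : row_full P.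

Local Notation K := (Bm *m P).

Lemma K_low (i : 'I_d) b : (i < r)%N -> K i b = 0.
Proof.
move=> hi; have := proj2 (hP _) (row_Bm_U hi).
by rewrite -row_mul => /rowP /(_ b); rewrite !mxE.
Qed.

Lemma K_inj_sum (f : 'I_d -> F) : (forall a, \sum_i f i * K i a = 0) ->
  forall i : 'I_d, (r <= i)%N -> f i = 0.
Proof.
move=> hf; pose z : 'rV[F]_d := \row_i (if (r <= i)%N then f i else 0).
have zK : z *m K = 0.
  apply/rowP => a; rewrite !mxE -[RHS](hf a); apply: eq_bigr => i _.
  rewrite mxE; case: (ltnP i r) => hi //.
  by rewrite K_low // !mulr0.
have zU : z *m Bm \in U by apply/hP; rewrite -mulmxA.
move/coordU: zU; rewrite mulmxK ?Bm_unit // => hz i hi.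
by have := hz i hi; rewrite mxE hi.
Qed.

Lemma sum_K (f : 'I_d -> F) a : (forall i : 'I_d, (r <= i)%N -> f i = 0) ->
  \sum_i f i * K i a = 0.
Proof.
move=> hf; apply: big1 => i _; case: (ltnP i r) => hi.
  by rewrite K_low // mulr0.
by rewrite hf // mul0r.
Qed.

Lemma PMP_coord M : P^T *m M *m P = K^T *m (Bi^T *m M *m Bi) *m K.
Proof. by rewrite {1}[M]coordM trmx_mul !mulmxA. Qed.

Lemma MP_coord M : M *m P = Bm^T *m ((Bi^T *m M *m Bi) *m K).
Proof. by rewrite {1}[M]coordM !mulmxA. Qed.

Lemma ker1 M : P^T *m M *m P = 0 <->
  (forall i j : 'I_d, (r <= i)%N -> (r <= j)%N -> (Bi^T *m M *m Bi) i j = 0).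
Proof.
rewrite PMP_coord; set N := Bi^T *m M *m Bi.
have E a b : (K^T *m N *m K) a b = \sum_j (\sum_i N i j * K i a) * K j b.
  rewrite mxE; apply: eq_bigr => j _; rewrite mxE; congr (_ * _).
  by apply: eq_bigr => i _; rewrite mxE mulrC.
split.
  move=> h0 i j hi hj.
  have h1 : forall a, \sum_i N i j * K i a = 0.
    move=> a; apply: (K_inj_sum (f := fun j => \sum_i N i j * K i a)) hj => b.
    by have /matrixP /(_ a b) := h0; rewrite E mxE.
  exact: (K_inj_sum (f := fun i => N i j)) hi.
move=> h0; apply/matrixP => a b; rewrite E mxE; apply: sum_K => j hj.
by apply: sum_K => i hi; apply: h0.
Qed.

Lemma ker2 M : M *m P = 0 <->
  (forall i j : 'I_d, (r <= j)%N -> (Bi^T *m M *m Bi) i j = 0).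
Proof.
rewrite MP_coord; set N := Bi^T *m M *m Bi.
have Bu : Bm^T \in unitmx by rewrite unitmx_tr Bm_unit.
split.
  move=> h0 i; have h1 : N *m K = 0.
    by rewrite -[N *m K](mulKmx Bu) h0 mulmx0.
  apply: K_inj_sum => a.
  by have /matrixP /(_ i a) := h1; rewrite !mxE.
move=> h0; have -> : N *m K = 0; last by rewrite mulmx0.
by apply/matrixP => i a; rewrite !mxE; apply: sum_K => j hj; apply: h0.
Qed.


Lemma PP1 (N : 'M[F]_(d - r)) :
  N \in wedge2 (fullv : {vspace 'rV[F]_(d - r)}) fullv <->
  exists2 M, M \in A2V & P^T *m M *m P = N.
Proof.
split.
  move=> /(A2full h2) sk; have [Q QP] := row_fullP hPf.
  exists (Q^T *m N *m Q); last by rewrite !mulmxA -trmx_mul QP trmx1 mul1mx -mulmxA QP mulmx1.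
  by apply/A2full => //; rewrite !trmx_mul trmxK sk mulNmx mulmxN mulmxA.
move=> [M HM <-]; move: M HM.
apply: wedge2_ind => [|a x y hx hy|x y _ _].
- by rewrite mulmx0 mul0mx mem0v.
- by rewrite mulmxDr mulmxDl -scalemxAr -scalemxAl; apply: memvD => //; apply: memvZ.
- by rewrite -wedgeM; apply: wedge2_gen; apply: memvf.
Qed.

Lemma PP2 M : M \in A2V -> (P^T *m M *m P = 0 <-> M \in UV).
Proof.
move=> /memA2V sk; split.
  by move=> /(ker1 M).1 h; apply/memUV.
by move=> /memUV [_ h]; apply/(ker1 M).2.
Qed.

Lemma PP3 (N : 'M[F]_(d, d - r)) :
  N \in tensor2 U (fullv : {vspace 'rV[F]_(d - r)}) <->
  exists2 M, M \in UV & M *m P = N.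
Proof.
split.
  have [Q QP] := row_fullP hPf.
  move: N; apply: tensor2_ind => [|a x y [M HM <-] [M' HM' <-]|x y xU _].
  - by exists 0; rewrite ?mem0v ?mul0mx.
  - exists (a *: M + M'); first by apply: memvD => //; apply: memvZ.
    by rewrite mulmxDl scalemxAl.
  - exists (wedge x (y *m Q)); first by apply: wedge2_gen => //; apply: memvf.
    by rewrite /wedge mulmxBl -!mulmxA QP mulmx1 (proj2 (hP x) xU) mulmx0 subr0.
move=> [M HM <-]; move: M HM.
apply: wedge2_ind => [|a x y hx hy|x y xU _].
- by rewrite mul0mx mem0v.
- by rewrite mulmxDl -scalemxAl; apply: memvD => //; apply: memvZ.
- rewrite /wedge mulmxBl -!mulmxA (proj2 (hP x) xU) mulmx0 subr0.
  by apply: tensor2_gen => //; apply: memvf.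
Qed.

Lemma PP4 M : M \in UV -> (M *m P = 0 <-> M \in A2U).
Proof.
move=> /memUV [sk _]; split.
  by move=> /(ker2 M).1 h; apply/memA2U.
by move=> /memA2U [_ h]; apply/(ker2 M).2.
Qed.

Lemma PP5 g : inH U g ->
  exists gb : 'M[F]_(d - r),
    [/\ gb \in unitmx, g *m P = P *m gb &
        (forall M : 'M[F]_d,
          P^T *m (g^T *m M *m g) *m P = gb^T *m (P^T *m M *m P) *m gb
          /\ (g^T *m M *m g) *m P = g^T *m (M *m P) *m gb)].
Proof.
move=> Hg; have [gu gU] := Hg; have [Q QP] := row_fullP hPf.
have key : g *m P = P *m (Q *m g *m P).
  apply/row_matrixP => i; rewrite !rowE; set v := delta_mx 0 i.
  have : (v - v *m P *m Q) *m P = 0.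
    by rewrite mulmxBl -(mulmxA (v *m P) Q P) QP mulmx1 subrr.
  move/hP => /gU /hP; rewrite !mulmxBl => /eqP; rewrite subr_eq0 => /eqP.
  by rewrite !mulmxA.
exists (Q *m g *m P); split => //.
  rewrite -row_free_unit; apply: inj_row_free => x hx.
  have : (x *m Q) *m g \in U by apply/hP; rewrite -hx !mulmxA.
  move=> /(inH_pre Hg) /hP; rewrite -mulmxA QP mulmx1; exact.
move=> M; set gb := Q *m g *m P in key *; split.
  rewrite !mulmxA -trmx_mul key -(mulmxA _ g P) key trmx_mul.
  by rewrite !mulmxA.
by rewrite -!mulmxA key.
Qed.

End PPart.

Definition E0 : 'M[F]_(d, d - r) := \matrix_(i, j) ((i : nat) == r + j)%:R.
Definition P0 := Bi *m E0.

Lemma rb_lt (b : 'I_(d - r)) : (r + b < d)%N.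
Proof. have := ltn_ord b; have := hrd; lia. Qed.

Lemma sum_sel (f : 'I_d -> F) (b : 'I_(d - r)) :
  \sum_i f i * ((i : nat) == r + b)%:R = f (Ordinal (rb_lt b)).
Proof.
rewrite (bigD1 (Ordinal (rb_lt b))) //= eqxx mulr1 big1 ?addr0 // => i hi.
case: eqP => [e|]; last by rewrite mulr0.
have ei : i = Ordinal (rb_lt b) by apply: val_inj.
by rewrite ei eqxx in hi.
Qed.

Lemma mulE0 m (A : 'M[F]_(m, d)) i b : (A *m E0) i b = A i (Ordinal (rb_lt b)).
Proof.
rewrite mxE -sum_sel; apply: eq_bigr => k _; by rewrite /E0 mxE.
Qed.

Lemma hP0 v : v *m P0 = 0 <-> v \in U.
Proof.
rewrite /P0 mulmxA; split.
  move=> /rowP h; apply/coordU => j hj.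
  have hjb : (j - r < d - r)%N by have := ltn_ord j; lia.
  have ej : j = Ordinal (rb_lt (Ordinal hjb)) by apply: val_inj => /=; lia.
  by rewrite ej -mulE0 h mxE.
move=> /coordU h; apply/rowP => b; rewrite mulE0 h ?mxE //=.
by rewrite leq_addr.
Qed.

Lemma hP0f : row_full P0.
Proof.
apply/row_fullP; exists (E0^T *m Bm).
rewrite /P0 mulmxA -(mulmxA _ Bm) BmBi mulmx1.
apply/matrixP => a b; rewrite mulE0 !mxE /=.
by rewrite eqn_add2l eq_sym.
Qed.

Lemma UV_sub : (UV <= A2V)%VS.
Proof. by apply: wedge2_mono; apply: subvf. Qed.

Lemma A2U_sub : (A2U <= UV)%VS.
Proof. by apply: wedge2_mono; [apply: subvv | apply: subvf]. Qed.

Lemma dimA2V : \dim A2V = (\dim UV + \dim (wedge2 (fullv : {vspace 'rV[F]_(d - r)}) fullv))%N.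
Proof.
pose f := linfun (mulmxr P0 \o mulmx P0^T).
have fE M : f M = P0^T *m M *m P0 by rewrite lfunE.
rewrite -(limg_ker_dim f A2V); congr (_ + _)%N; congr (\dim _).
  apply/vspaceP => M; rewrite memv_cap memv_ker fE; apply/andP/idP.
    by move=> [HM /eqP h]; apply/(PP2 hP0 HM).
  move=> HM; have HM' := subvP UV_sub _ HM.
  by split => //; apply/eqP/(PP2 hP0 HM').
apply/vspaceP => N; apply/memv_imgP/idP.
  by move=> [M HM ->]; rewrite fE; apply/(PP1 hP0f); exists M.
by move=> /(PP1 hP0f) [M HM <-]; exists M => //; rewrite fE.
Qed.

Lemma dimUV : \dim UV = (\dim A2U + \dim (tensor2 U (fullv : {vspace 'rV[F]_(d - r)})))%N.
Proof.
pose f := linfun (mulmxr P0 : 'M[F]_d -> 'M[F]_(d, d - r)).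
have fE M : f M = M *m P0 by rewrite lfunE.
rewrite -(limg_ker_dim f UV); congr (_ + _)%N; congr (\dim _).
  apply/vspaceP => M; rewrite memv_cap memv_ker fE; apply/andP/idP.
    by move=> [HM /eqP h]; apply/(PP4 hP0 HM).
  move=> HM; have HM' := subvP A2U_sub _ HM.
  by split => //; apply/eqP/(PP4 hP0 HM').
apply/vspaceP => N; apply/memv_imgP/idP.
  by move=> [M HM ->]; rewrite fE; apply/(PP3 hP0 hP0f); exists M.
by move=> /(PP3 hP0 hP0f) [M HM <-]; exists M => //; rewrite fE.
Qed.

Definition J : 'M[F]_(r, d) := \matrix_(i < r) (vbasis U)`_i.

Lemma J_U x : x *m J \in U.
Proof.
rewrite mulmx_sum_row; apply: memv_suml => i _; apply: memvZ.
by rewrite rowK; apply: vbasis_mem; apply: mem_nth; rewrite size_tuple.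
Qed.

Lemma U_J u : u \in U -> exists x, u = x *m J.
Proof.
move=> uU; have : u \in <<vbasis U>>%VS by rewrite (span_basis (vbasisP U)).
move=> /coord_span ->; exists (\row_i coord (vbasis U) i u).
rewrite mulmx_sum_row; apply: eq_bigr => i _; by rewrite rowK mxE.
Qed.

Lemma J_free : row_free J.
Proof.
apply: inj_row_free => x hx; apply/rowP => i; rewrite mxE.
move/freeP: (basis_free (vbasisP U)) => /(_ (fun i => x 0 i)); apply => //.
apply: etrans hx; rewrite mulmx_sum_row; apply: eq_bigr => k _; by rewrite rowK.
Qed.

Lemma dimA2U : \dim A2U = \dim (wedge2 (fullv : {vspace 'rV[F]_r}) fullv).
Proof.
have [J' JJ'] := row_freeP J_free.
pose f := linfun (mulmxr J \o mulmx J^T).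
have fE M : f M = J^T *m M *m J by rewrite lfunE.
have -> : A2U = (f @: wedge2 (fullv : {vspace 'rV[F]_r}) fullv)%VS.
  apply/vspaceP => M; apply/idP/memv_imgP.
    move: M; apply: wedge2_ind => [|a x y [K1 hK1 ->] [K2 hK2 ->]|x y xU yU].
    - by exists 0; rewrite ?mem0v // linear0.
    - exists (a *: K1 + K2); first by apply: memvD => //; apply: memvZ.
      by rewrite linearP.
    - have [x' ->] := U_J xU; have [y' ->] := U_J yU.
      exists (wedge x' y'); first by apply: wedge2_gen; apply: memvf.
      by rewrite fE wedgeM.
  move=> [K HK ->]; rewrite fE; move: K HK.
  apply: wedge2_ind => [|a x y hx hy|x y _ _].
  - by rewrite mulmx0 mul0mx mem0v.
  - by rewrite mulmxDr mulmxDl -scalemxAr -scalemxAl; apply: memvD => //; apply: memvZ.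
  - by rewrite -wedgeM; apply: wedge2_gen; apply: J_U.
apply: limg_dim_eq; apply/eqP; rewrite -subv0; apply/subvP => K.
rewrite memv_cap memv_ker fE memv0 => /andP [_ /eqP h].
have : J'^T *m (J^T *m K *m J) *m J' = K.
  by rewrite !mulmxA -trmx_mul JJ' trmx1 mul1mx -mulmxA JJ' mulmx1.
by rewrite h mulmx0 mul0mx => <-.
Qed.

Lemma dimT : \dim (tensor2 U (fullv : {vspace 'rV[F]_(d - r)})) = (r * (d - r))%N.
Proof.
have [J' JJ'] := row_freeP J_free.
pose f := linfun (mulmx J^T : 'M[F]_(r, d - r) -> 'M[F]_(d, d - r)).
have fE M : f M = J^T *m M by rewrite lfunE.
have -> : tensor2 U (fullv : {vspace 'rV[F]_(d - r)}) = (f @: fullv)%VS.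
  apply/vspaceP => M; apply/idP/memv_imgP.
    move: M; apply: tensor2_ind => [|a x y [K1 _ ->] [K2 _ ->]|x y xU _].
    - by exists 0; rewrite ?mem0v // linear0.
    - by exists (a *: K1 + K2); rewrite ?memvf // linearP.
    - have [x' ->] := U_J xU; exists (x'^T *m y); first exact: memvf.
      by rewrite fE trmx_mul mulmxA.
  move=> [K _ ->]; rewrite fE [K]matrix_sum_delta mulmx_sumr.
  apply: memv_suml => i _; rewrite mulmx_sumr; apply: memv_suml => j _.
  rewrite -scalemxAr; apply: memvZ.
  rewrite -(@mul_delta_mx F r 1 (d - r) 0 i j) (mulmxA J^T) -trmx_delta -trmx_mul -rowE.
  by apply: tensor2_gen; [rewrite rowE; apply: J_U | apply: memvf].
rewrite limg_dim_eq ?dimvf ?dim_matrix //.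
apply/eqP; rewrite -subv0; apply/subvP => K.
rewrite memv_cap memv_ker fE memv0 => /andP [_ /eqP h].
have : J'^T *m (J^T *m K) = K by rewrite mulmxA -trmx_mul JJ' trmx1 mul1mx.
by rewrite h mulmx0 => <-.
Qed.

End Coords.


Lemma Sk_small (F : finFieldType) n : (n <= 1)%N ->
  wedge2 (fullv : {vspace 'rV[F]_n}) fullv = 0%VS.
Proof.
move=> hn; apply/eqP; rewrite -subv0; apply/subvP => M.
apply: (@wedge2_ind F n fullv fullv (fun M => M \in 0%VS)) => [|a x y hx hy|x y _ _].
- exact: mem0v.
- by apply: memvD => //; apply: memvZ.
rewrite memv0; apply/eqP/matrixP => i j; rewrite wedge_entry mxE.
have -> : i = j by apply: ord_inj; have := ltn_ord i; have := ltn_ord j; lia.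
by rewrite mulrC subrr.
Qed.

Lemma dimSk (F : finFieldType) (h2 : (2%:R : F) != 0) n :
  \dim (wedge2 (fullv : {vspace 'rV[F]_n}) fullv) = 'C(n, 2).
Proof.
suff : forall m k, (k <= m)%N -> \dim (wedge2 (fullv : {vspace 'rV[F]_k}) fullv) = 'C(k, 2).
  by move=> /(_ n n (leqnn n)).
elim=> [|m IH] k hk.
  by rewrite Sk_small ?dimv0 ?bin_small //; lia.
case: (leqP k m) => hkm; first exact: IH.
have ek : k = m.+1 by lia.
case: (leqP k 1) => hk1; first by rewrite Sk_small ?dimv0 ?bin_small //; lia.
pose v0 : 'rV[F]_k := delta_mx ord0 (Ordinal (ltnW hk1)).
pose U : {vspace 'rV[F]_k} := (<[v0]>)^C%VS.
have hdU : \dim U = k.-1.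
  rewrite dimv_compl dim_vline dimvf dim_matrix mul1r.
  have -> : (v0 != 0).
    apply/eqP => /rowP /(_ (Ordinal (ltnW hk1))); rewrite !mxE !eqxx /=.
    by move/eqP; rewrite oner_eq0.
  by rewrite subn1.
rewrite (dimA2V U h2) Sk_small; last by rewrite hdU; lia.
rewrite dimv0 addn0 (dimUV U h2) dimT dimA2U.
have hU1 : (\dim U <= m)%N by rewrite hdU; lia.
rewrite (IH _ hU1) hdU.
have -> : (k - k.-1 = 1)%N by lia.
rewrite muln1 ek /= binS bin1 //.
Qed.

Unset Implicit Arguments.
Set Strict Implicit.

Theorem mainTheorem9 (F : finFieldType) (d r : nat) (U : {vspace 'rV[F]_d}) :
  ~~ (2%N \in [pchar F]) -> (2 < d)%N -> (0 < r < d)%N -> \dim U = r ->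
  let A2U := wedge2 U U in
  let UV := wedge2 U fullv in
  let A2V := wedge2 (fullv : {vspace 'rV[F]_d}) fullv in
  [/\ (* the H-submodules of A^2 V are exactly 0, A^2 U, U /\ V, A^2 V *)
      (forall W : {vspace 'M[F]_d},
         ((W <= A2V)%VS /\ Hinvariant U W) <->
         [\/ W = 0%VS, W = A2U, W = UV | W = A2V]),
      (* they form a chain (uniserial) *)
      (A2U <= UV)%VS /\ (UV <= A2V)%VS,
      (* factors: for any quotient map pi : V -> V/U = F^(d-r), v |-> v P *)
      (forall P : 'M[F]_(d, d - r),
         (forall v : 'rV[F]_d, v *m P = 0 <-> v \in U) -> row_full P ->
         [/\ (* A^2 pi : A^2 V -> A^2 (V/U) is onto with kernel U /\ V *)
             (forall N : 'M[F]_(d - r),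
                N \in wedge2 (fullv : {vspace 'rV[F]_(d - r)}) fullv <->
                exists2 M, M \in A2V & P^T *m M *m P = N),
             (forall M, M \in A2V -> (P^T *m M *m P = 0 <-> M \in UV)),
             (* u /\ v |-> u (x) pi v : U /\ V -> U (x) V/U is onto with kernel A^2 U *)
             (forall N : 'M[F]_(d, d - r),
                N \in tensor2 U (fullv : {vspace 'rV[F]_(d - r)}) <->
                exists2 M, M \in UV & M *m P = N),
             (forall M, M \in UV -> (M *m P = 0 <-> M \in A2U)) &
             (* both maps are H-equivariant for the induced action gb on V/U *)
             (forall g, inH U g ->
                exists gb : 'M[F]_(d - r),
                  [/\ gb \in unitmx, g *m P = P *m gb &
                      (forall M : 'M[F]_d,
                        P^T *m (g^T *m M *m g) *m P = gb^T *m (P^T *m M *m P) *m gb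
                        /\ (g^T *m M *m g) *m P = g^T *m (M *m P) *m gb)])]) &
      (* dimensions of the factors *)
      [/\ \dim A2V = (\dim UV + 'C(d - r, 2))%N,
          \dim UV = (\dim A2U + r * (d - r))%N &
          \dim A2U = 'C(r, 2)]].
Proof.
move=> hch _ _ hU; subst r.
have h2 : (2%:R : F) != 0.
  by apply: contra hch => h; rewrite inE /=.
move=> A2U UV A2V; split.
- move=> W; split; first by move=> [hA hH]; apply: classify.
  have inv (S T : {vspace 'rV[F]_d}) : (forall g, inH U g -> (forall u, u \in S -> u *m g \in S)) ->
      (forall g, inH U g -> (forall u, u \in T -> u *m g \in T)) ->
      Hinvariant U (wedge2 S T).
    by move=> hS hT g Hg M HM; apply: wedge2_inv => //; [apply: hS | apply: hT].
  have gU g : inH U g -> forall u, u \in U -> u *m g \in U by move=> [].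
  have gF g : inH U g -> forall u, u \in (fullv : {vspace 'rV[F]_d}) -> u *m g \in fullv.
    by move=> _ u _; apply: memvf.
  case=> ->; split.
  + exact: sub0v.
  + by move=> g _ M; rewrite memv0 => /eqP ->; rewrite mulmx0 mul0mx mem0v.
  + exact: subv_trans (A2U_sub U) (UV_sub U).
  + exact: inv.
  + exact: UV_sub.
  + exact: inv.
  + exact: subvv.
  + exact: inv.
- by split; [apply: A2U_sub | apply: UV_sub].
- move=> P hP hPf; split.
  + exact: PP1.
  + exact: PP2.
  + exact: PP3.
  + exact: PP4.
  + by move=> g Hg; apply: PP5.
- split.
  + by rewrite (dimA2V U h2) dimSk.
  + by rewrite (dimUV U h2) dimT.
  + by rewrite dimA2U dimSk.
Qed.
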